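(* Let $G$ be a finite graph in which every vertex has degree at most $d$. Then $$\tfrac12 PW(G)\le BW(G)\le d\cdot PW(G).$$
   Context: Bubble width: a bubbling of $G$ is an ordering $b_1,\dots,b_N$ of all vertices of $G$. Set $S_i=\{b_1,\dots,b_i\}$, and let $z_i$ be the set of edges with exactly one endpoint in $S_i$. The width of the bubbling is $\max_i|z_i|$. $BW(G)$ is the minimum width over all bubblings of $G$. Path width: a path decomposition of $G$ is a path $T$ (a tree with all nodes of degree at most 2) together with a subset $\tilde t\subseteq V(G)$ assigned to each node $t$ of $T$, such that: (1) for each edge $(v,w)$ of $G$, some subset $\tilde t$ contains both $v$ and $w$; (2) if $v$ lies in $\tilde t_1$ and in $\tilde t_2$, then $v$ lies in every subset on the path between $t_1$ and $t_2$. The width of the decomposition is $\max_t|\tilde t|$ (the number of vertices in the largest subset, with no $-1$). $PW(G)$ is the minimum width over all path decompositions of $G$. *)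

(* Defs.v *)
From mathcomp Require Import all_boot fingroup perm.
From mathcomp Require Import boolp.
Set Implicit Arguments. Unset Strict Implicit. Unset Printing Implicit Defensive.

(* A finite simple graph: vertex type T (finType), adjacency e : rel T,
   assumed symmetric and irreflexive in the theorem. *)

Section Graph.
Variables (T : finType) (e : rel T).

(* number of edges with exactly one endpoint in S (each edge counted once,
   via the ordered pair (inside endpoint, outside endpoint)) *)
Definition cut_size (S : {set T}) : nat :=
  #|[set p : T * T | [&& e p.1 p.2, p.1 \in S & p.2 \notin S]]|.

(* a bubbling is an ordering b_1..b_N of all vertices: a seq that is a
   permutation of enum T; its width is max_i |z_i| with S_i = {b_1..b_i} *)
Definition is_bubbling (s : seq T) : Prop := perm_eq s (enum T).

Definition bubbling_width (s : seq T) : nat :=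
  \max_(i < (size s).+1) cut_size [set x in take i s].

(* BW(G): minimum width over all bubblings (every ordering is
   [seq p x | x <- enum T] for some permutation p of T) *)
Definition BW : nat :=
  \big[minn/bubbling_width (enum T)]_(p : {perm T})
     bubbling_width [seq p x | x <- enum T].

(* path decomposition: nodes of the path T listed in order, with bags *)
Definition is_path_decomposition (bags : seq {set T}) : Prop :=
  bags != [::] /\
  (forall v w, e v w -> exists2 i, i < size bags &
      (v \in nth set0 bags i) && (w \in nth set0 bags i)) /\
  (forall v i j k, i <= j -> j <= k -> k < size bags ->
      v \in nth set0 bags i -> v \in nth set0 bags k -> v \in nth set0 bags j).

Definition pd_width (bags : seq {set T}) : nat := \max_(B <- bags) #|B|.

Lemma PW_exists : exists n, `[< exists2 bags, is_path_decomposition bags &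
                                  pd_width bags = n >].
Proof.
exists (pd_width [:: setT]); apply/asboolP; exists [:: setT] => //.
split => //; split.
- by move=> v w _; exists 0 => //=; rewrite !in_setT.
- by move=> v [|i] [|j] [|k] //=; case: i.
Qed.

Definition PW : nat := ex_minn PW_exists.

End Graph.

Definition max_degree_le (T : finType) (e : rel T) (d : nat) : Prop :=
  forall v : T, #|[set w | e v w]| <= d.

(* Main.v *)
Require Import Defs.
From mathcomp Require Import all_boot fingroup perm.
From mathcomp Require Import boolp.
Set Implicit Arguments. Unset Strict Implicit.

Lemma bigmin_le (I : eqType) (r : seq I) x0 (F : I -> nat) i :
  i \in r -> \big[minn/x0]_(j <- r) F j <= F i.
Proof.
elim: r => //= a r IH; rewrite in_cons big_cons => /orP[/eqP->|/IH h].
  exact: geq_minl.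
exact: leq_trans (geq_minr _ _) h.
Qed.

Lemma card_adj (T : finType) (e : rel T) d (A : {set T}) :
  max_degree_le e d -> #|[set p : T * T | (p.1 \in A) && e p.1 p.2]| <= #|A| * d.
Proof.
move=> hd.
rewrite -sum1_card big_mkcond /=.
rewrite (eq_bigr (fun p => (fun u w => if (u \in A) && e u w then 1 else 0) p.1 p.2)); last first.
  by move=> [u w] _; rewrite inE.
rewrite -(pair_bigA _ (fun u w => if (u \in A) && e u w then 1 else 0)) /= -sum_nat_const [X in _ <= X]big_mkcond /=.
idtac.
apply: leq_sum => u _.
case: (u \in A) => /=; last by rewrite big1.
apply: leq_trans (hd u).
rewrite -sum1_card [X in _ <= X]big_mkcond /=.
by apply: leq_sum => w _; rewrite inE.
Qed.
Lemma perm_of_seq (T : finType) (s : seq T) :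
  perm_eq s (enum T) -> exists p : {perm T}, [seq p x | x <- enum T] = s.
Proof.
move=> hs.
have us : uniq s by rewrite (perm_uniq hs) enum_uniq.
have sz : size s = size (enum T) by rewrite (perm_size hs).
pose f := fun x : T => nth x s (index x (enum T)).
have ilt : forall x : T, index x (enum T) < size s by move=> x; rewrite sz index_mem mem_enum.
have finj : injective f.
  move=> x y; rewrite /f (set_nth_default y) ?ilt // => /eqP.
  rewrite nth_uniq ?ilt // => /eqP h.
  by rewrite -(nth_index x (mem_enum T x)) h nth_index ?mem_enum.
exists (perm finj).
case E: s => [|x0 s'].
  by move: sz; rewrite E => /esym/size0nil ->.
rewrite -E; apply: (@eq_from_nth _ x0) => [|i]; first by rewrite size_map sz.
rewrite size_map => hi.
rewrite (nth_map x0) // permE /f index_uniq ?enum_uniq -?sz //.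
  by rewrite (set_nth_default x0) // sz.
by rewrite sz.
Qed.

Lemma bw_le_pd (T : finType) (e : rel T) d (bags : seq {set T}) :
  max_degree_le e d -> is_path_decomposition e bags ->
  BW e <= d * pd_width bags.
Proof.
move=> hd [_ [hedge hcont]].
pose f := fun v : T => find (fun B : {set T} => v \in B) bags.
pose r := fun x y => f x <= f y.
pose s := sort r (enum T).
have hs : perm_eq s (enum T) by rewrite /s perm_sort.
have [p hp] := perm_of_seq hs.
apply: leq_trans (bigmin_le _ _ (mem_index_enum p)) _; rewrite hp.
apply/bigmax_leqP => i _.
set S := [set x in take i s].
have srt : sorted r s by apply: sort_sorted => x y; exact: leq_total.
have pw : pairwise r s.
  by rewrite -sorted_pairwise // => x y z; exact: leq_trans.
move: pw; rewrite -(cat_take_drop i s) pairwise_cat => /and3P[/allrelP ar _ _].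
have outS : forall w, w \notin S -> forall u, u \in S -> f u <= f w.
  move=> w wS u uS; apply: ar; first by move: uS; rewrite inE.
  have : w \in take i s ++ drop i s by rewrite cat_take_drop (perm_mem hs) mem_enum.
  by rewrite mem_cat; move: wS; rewrite inE => /negbTE ->.
pose X := [set u in S | [exists w, e u w && (w \notin S)]].
have cutX : cut_size e S <= #|X| * d.
  apply: leq_trans (card_adj X hd); apply: subset_leq_card; apply/subsetP => [[u w]].
  rewrite !inE /= => /and3P[euw uS wS]; rewrite euw andbT uS /=.
  by apply/existsP; exists w; rewrite euw /= inE.
apply: leq_trans cutX _; rewrite mulnC leq_mul2l; apply/orP; right.
have [X0|Xn0] := posnP #|X|; first by rewrite X0.
have [u1 u1X tE] := eq_bigmax_cond f Xn0.
set t := \max_(u in X) f u in tE.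
have key : forall u, u \in X -> (t < size bags) && (u \in nth set0 bags t).
  move=> u; rewrite inE => /andP[uS /existsP[w /andP[euw wS]]].
  have [k kl /andP[uk wk]] := hedge u w euw.
  have fwk : f w <= k.
    rewrite leqNgt; apply/negP => /(before_find set0).
    by rewrite /= wk.
  have tk : t <= k.
    rewrite tE; apply: leq_trans (outS w wS u1 _) fwk.
    by move: u1X; rewrite inE => /andP[].
  have fut : f u <= t.
    by apply: (@leq_bigmax_cond _ (fun v => v \in X) f u); rewrite inE uS /=; apply/existsP; exists w; rewrite euw wS.
  rewrite (leq_ltn_trans tk kl) /=.
  have hu : u \in nth set0 bags (f u).
    apply: (nth_find set0 (a := fun B : {set T} => u \in B)); rewrite has_find; exact: leq_ltn_trans (leq_trans fut tk) kl.
  exact: (hcont u (f u) t k fut tk kl hu uk).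
have tl : t < size bags by have /andP[] := key u1 u1X.
apply: (leq_trans (subset_leq_card (_ : X \subset nth set0 bags t))).
  by apply/subsetP => u /key /andP[].
rewrite /pd_width; apply: (@leq_bigmax_seq _ bags xpredT (fun B : {set T} => #|B|) (nth set0 bags t)) => //.
exact: mem_nth.
Qed.

Lemma PW_le (T : finType) (e : rel T) (bags : seq {set T}) :
  is_path_decomposition e bags -> PW e <= pd_width bags.
Proof.
move=> hb; rewrite /PW; case: ex_minnP => m _ hmin; apply: hmin.
by apply/asboolP; exists bags.
Qed.

Lemma cut_le_bw (T : finType) (e : rel T) (s : seq T) j :
  j <= size s -> cut_size e [set x in take j s] <= bubbling_width e s.
Proof.
move=> hj; rewrite /bubbling_width.
have hj' : j < (size s).+1 by [].
exact: (@leq_bigmax _ (fun i : 'I_(size s).+1 => cut_size e [set x in take i s]) (Ordinal hj')).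
Qed.

Lemma pw_le_bw (T : finType) (e : rel T) (s : seq T) :
  symmetric e -> irreflexive e -> perm_eq s (enum T) ->
  PW e <= 2 * bubbling_width e s.
Proof.
move=> esym eirr hs.
have us : uniq s by rewrite (perm_uniq hs) enum_uniq.
have ins : forall x, x \in s by move=> x; rewrite (perm_mem hs) mem_enum.
have [noedge|] := boolP [forall u, forall v, ~~ e u v].
  apply: leq_trans (PW_le (bags := [:: set0]) _) _.
    split => //; split.
      by move=> v w evw; move/forallP: noedge => /(_ v) /forallP /(_ w); rewrite evw.
    by move=> v [|i] j k _ _ _ /=; rewrite ?nth_nil inE.
  by rewrite /pd_width big_cons big_nil cards0.
rewrite negb_forall => /existsP[u]; rewrite negb_forall => /existsP[v]; rewrite negbK => euv.
set n := size s.
have lt_edge : forall a b, e a b -> index a s < index b s ->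
    0 < cut_size e [set x in take (index a s).+1 s].
  move=> a b eab ab; apply/card_gt0P; exists (a, b); rewrite !inE /= eab.
  rewrite !in_take_leq ?ltnSn /= -?leqNgt ?ab //; by rewrite index_mem ins.
have wpos : 0 < bubbling_width e s.
  have nuv : index u s != index v s.
    apply/negP => /eqP h; have : u = v by rewrite -(nth_index u (ins u)) h nth_index.
    by move=> E; move: euv; rewrite E eirr.
  case: (ltngtP (index u s) (index v s)) nuv => // h _.
    apply: leq_trans (lt_edge u v euv h) (cut_le_bw e _); by rewrite index_mem ins.
  rewrite esym in euv.
  apply: leq_trans (lt_edge v u euv h) (cut_le_bw e (_ : _ <= size s)); by rewrite index_mem ins.
pose B := fun j => nth u s j |: [set x in take j s | [exists y, e x y && (y \notin take j s)]].
pose bags := [seq B j | j <- iota 0 n].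
have nthb : forall j, j < n -> nth set0 bags j = B j.
  by move=> j hj; rewrite (nth_map 0) ?size_iota // nth_iota.
have sizeb : size bags = n by rewrite size_map size_iota.
apply: leq_trans (PW_le (bags := bags) _) _.
  have ltn_n : forall x, index x s < n by move=> x; rewrite index_mem ins.
  have inB : forall j x, j < n -> x \in B j ->
      (x == nth u s j) || ((index x s < j) && [exists y, e x y && (j <= index y s)]).
    move=> j x jn; rewrite !inE => /orP[->//|/andP[xj /existsP[y /andP[exy yj]]]].
    rewrite in_take_leq ?(ltnW jn) // in xj; rewrite xj /=.
    apply/orP; right; apply/existsP; exists y; rewrite exy /=.
    by move: yj; rewrite in_take_leq ?(ltnW jn) // -leqNgt.
  rewrite /is_path_decomposition -/bags.
  split; first by apply/eqP => h; move: sizeb (ltn_n u); rewrite h /= => <-.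
  split.
    have half : forall a b, e a b -> index a s < index b s -> exists2 i, i < size bags &
        (a \in nth set0 bags i) && (b \in nth set0 bags i).
      move=> a b eab ab; exists (index b s); first by rewrite /bags size_map size_iota ltn_n.
      rewrite nthb ?ltn_n // !inE nth_index ?ins // eqxx andbT.
      rewrite in_take_leq ?(ltnW (ltn_n b)) // ab /=.
      apply/orP; right; apply/existsP; exists b; rewrite eab /=.
      by rewrite in_take_leq ?(ltnW (ltn_n b)) // ltnn.
    move=> a b eab.
    have nab : index a s != index b s.
      apply/negP => /eqP h; have : a = b by rewrite -(nth_index u (ins a)) h nth_index.
      by move=> E; move: eab; rewrite E eirr.
    case: (ltngtP (index a s) (index b s)) nab => // h _; first exact: half.
    rewrite esym in eab; have [i hi hab] := half b a eab h.
    by exists i => //; rewrite andbC.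
  move=> x i j k ij jk; rewrite sizeb => kn.
  have jn : j < n by exact: leq_ltn_trans jk kn.
  have in_ := leq_ltn_trans ij jn.
  rewrite !nthb // => xi xk.
  have [eij|neq] := eqVneq i j; first by rewrite -eij.
  have ij' : i < j by rewrite ltn_neqAle neq ij.
  have ixi : index x s <= i.
    move: (inB i x in_ xi) => /orP[/eqP->|/andP[h _]]; last exact: ltnW.
    by rewrite index_uniq.
  move: (inB k x kn xk) => /orP[/eqP xe|/andP[_ /existsP[y /andP[exy yk]]]].
    have : index x s = k by rewrite xe index_uniq.
    move=> h; move: ixi; rewrite h => ki.
    by move: (leq_trans jk ki); rewrite leqNgt ij'.
  rewrite !inE; apply/orP; right.
  rewrite in_take_leq ?(ltnW jn) // (leq_ltn_trans ixi ij') /=.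
  apply/existsP; exists y; rewrite exy /= in_take_leq ?(ltnW jn) // -leqNgt.
  exact: leq_trans jk yk.
rewrite /pd_width; apply/bigmax_leqP_seq => Bj /mapP[j]; rewrite mem_iota add0n => /andP[_ jn] -> _.
rewrite cardsU1; apply: (@leq_trans (1 + bubbling_width e s)); last by rewrite mul2n -addnn leq_add2r.
apply: leq_add; first by case: (_ \notin _).
apply: leq_trans (cut_le_bw e (ltnW jn)).
apply: leq_trans (leq_imset_card fst _).
apply: subset_leq_card; apply/subsetP => x; rewrite inE => /andP[xj /existsP[y /andP[exy yj]]].
by apply/imsetP; exists (x, y) => //; rewrite !inE /= exy xj.
Qed.

Theorem lemma2 (T : finType) (e : rel T) (d : nat) :
  symmetric e -> irreflexive e -> max_degree_le e d ->
  PW e <= 2 * BW e /\ BW e <= d * PW e.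
Proof.
move=> esym eirr hd; split.
  rewrite /BW; apply: (big_ind (fun m => PW e <= 2 * m)).
  - by apply: pw_le_bw => //; exact: perm_refl.
  - by move=> x y hx hy; rewrite /minn; case: ifP.
  move=> p _; apply: pw_le_bw => //.
  apply: uniq_perm; first by rewrite map_inj_uniq ?enum_uniq //; exact: perm_inj.
    exact: enum_uniq.
  move=> x; rewrite mem_enum; apply/mapP; exists (p^-1 x)%g; first by rewrite mem_enum.
  by rewrite permKV.
rewrite /PW; case: ex_minnP => m /asboolP [bags hb <-] _.
exact: bw_le_pd.
Qed.
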